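(* Let $M$ be an entrywise nonnegative $m\times n$ real matrix and let $M=AW$ be a stable nonnegative matrix factorization with $A\in\mathbb{R}_{\ge0}^{m\times r}$, $W\in\mathbb{R}_{\ge0}^{r\times n}$. Let $s=\mathrm{rank}(A)$, let $U\subseteq[m]$ be a set of $s$ linearly independent rows of $A$, and let $B_1,\dots,B_p$ be the ensemble of $A$ at $U$. Then for every $k\in[p]$ and every column index $i$, $AB_kM_i^U=M_i$.
   Context: Notation: $M_i$ is the $i$-th column, $M^j$ the $j$-th row; $A_S$ denotes columns in $S$, $A^U$ rows in $U$, $M_i^U$ the entries of $M_i$ in rows $U$. $\mathrm{aff}(A)=\{\sum_i\alpha_iA_i:\alpha_i\ge0\}$. A subset $S\subseteq[r]$ of columns of $A$ is admissible for $v\in\mathbb{R}^m$ if $v\in\mathrm{aff}(A_S)$; a subset $T\subseteq[r]$ of rows of $W$ is admissible for a row vector $u$ if $u$ is a nonnegative combination of the rows of $W^T$. Lexicographic ordering on subsets of $[r]$: if $|S|<|T|$ then $S$ precedes $T$; equal-size subsets compared by standard lexicographic order. $M=AW$ is stable if, with $S_i$ the lexicographically first subset of columns of $A$ admissible for $M_i$ and $T_j$ the lexicographically first subset of rows of $W$ admissible for $M^j$, each $W_i$ is supported in $S_i$ and each row $A^j$ is supported in $T_j$. Ensemble: let $S_1,\dots,S_p$ be all sets of $s$ linearly independent columns of $A$, in lexicographic order; $B_k$ is the $r\times s$ matrix that is zero on rows outside $S_k$ and whose restriction to rows $S_k$ equals $(A^U_{S_k})^{-1}$. *)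

(* Defs.v *)
From HB Require Import structures.
From mathcomp Require Import all_boot all_order all_algebra.
Set Implicit Arguments. Unset Strict Implicit. Unset Printing Implicit Defensive.
Import Order.TTheory GRing.Theory Num.Theory.
Local Open Scope ring_scope.

Section NMF.
Variable R : realFieldType.

Fixpoint lexlt (s t : seq nat) : bool :=
  match s, t with
  | [::], [::] => false
  | [::], _ :: _ => true
  | _ :: _, [::] => false
  | x :: s', y :: t' => (x < y)%N || ((x == y) && lexlt s' t')
  end.

Definition subset_prec (r : nat) (S T : {set 'I_r}) : bool :=
  (#|S| < #|T|)%N ||
  ((#|S| == #|T|) &&
   lexlt (sort leq [seq val j | j <- enum S]) (sort leq [seq val j | j <- enum T])).

Definition lex_first (r : nat) (P : {set 'I_r} -> Prop) (S : {set 'I_r}) : Prop :=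
  P S /\ forall T, P T -> T != S -> subset_prec S T.

Definition col_admissible (m r : nat) (A : 'M[R]_(m, r)) (S : {set 'I_r})
  (v : 'cV[R]_m) : Prop :=
  exists alpha : 'I_r -> R,
    (forall j, 0 <= alpha j) /\ v = \sum_(j in S) alpha j *: col j A.

Definition row_admissible (r n : nat) (W : 'M[R]_(r, n)) (T : {set 'I_r})
  (u : 'rV[R]_n) : Prop :=
  exists beta : 'I_r -> R,
    (forall l, 0 <= beta l) /\ u = \sum_(l in T) beta l *: row l W.

Definition stable (m n r : nat) (M : 'M[R]_(m, n)) (A : 'M[R]_(m, r))
  (W : 'M[R]_(r, n)) : Prop :=
  (forall (i : 'I_n) (S : {set 'I_r}),
      lex_first (fun S => col_admissible A S (col i M)) S ->
      forall j, j \notin S -> W j i = 0) /\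
  (forall (j : 'I_m) (T : {set 'I_r}),
      lex_first (fun T => row_admissible W T (row j M)) T ->
      forall l, l \notin T -> A j l = 0).

Definition nonneg_mx (p q : nat) (X : 'M[R]_(p, q)) : Prop :=
  forall i j, 0 <= X i j.

Definition strictly_increasing (s p : nat) (f : 'I_s -> 'I_p) : Prop :=
  forall a b : 'I_s, (a < b)%N -> (f a < f b)%N.

(* Ensemble member: for the column set S_k given by the increasing map g and row set
   U given by the increasing map f, B_k is the r x s matrix that vanishes on rows
   outside S_k and whose restriction to rows S_k equals (A^U_{S_k})^{-1}. *)
Definition ensemble_mx (m r s : nat) (A : 'M[R]_(m, r)) (f : 'I_s -> 'I_m)
  (g : 'I_s -> 'I_r) : 'M[R]_(r, s) :=
  \matrix_(j < r, b < s)
    match [pick a | g a == j] with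
    | Some a => invmx (rowsub f (colsub g A)) a b
    | None => 0
    end.

End NMF.

(* Main.v *)
Require Import Defs.
From HB Require Import structures.
From mathcomp Require Import all_boot all_order all_algebra.
Import Order.TTheory GRing.Theory Num.Theory.
Local Open Scope ring_scope.

Lemma sinc_inj (s p : nat) (g : 'I_s -> 'I_p) :
  strictly_increasing g -> injective g.
Proof.
move=> hg a b eab; apply/val_inj => /=.
case: (ltngtP a b) => // h; have := hg _ _ h; rewrite eab ltnn //.
Qed.

Lemma ens_mul (R : realFieldType) (m r s : nat) (A : 'M[R]_(m, r))
  (f : 'I_s -> 'I_m) (g : 'I_s -> 'I_r) :
  injective g ->
  A *m ensemble_mx A f g = colsub g A *m invmx (rowsub f (colsub g A)).
Proof.
move=> ig; set X := invmx _.
have hE : forall j b, ensemble_mx A f g j b = \sum_a (g a == j)%:R * X a b.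
  move=> j b; rewrite /ensemble_mx mxE.
  case: pickP => [a /eqP ga | none].
    rewrite (bigD1 a) //= ga eqxx mul1r big1 ?addr0 // => a' ne.
    case: eqP => [e|]; last by rewrite mul0r.
    by move: ne; rewrite -ga in e; rewrite (ig _ _ e) eqxx.
  by rewrite big1 // => a _; rewrite none mul0r.
apply/matrixP => i b; rewrite !mxE.
under eq_bigr do rewrite hE big_distrr.
rewrite exchange_big /=; apply: eq_bigr => a _.
rewrite (bigD1 (g a)) //= eqxx mul1r big1 ?addr0; first by rewrite mxE.
by move=> j /negPf ne; rewrite eq_sym ne mul0r mulr0.
Qed.

Theorem mainTheorem7 (R : realFieldType) (m n r s : nat)
  (M : 'M[R]_(m, n)) (A : 'M[R]_(m, r)) (W : 'M[R]_(r, n))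
  (hM : nonneg_mx M) (hA : nonneg_mx A) (hW : nonneg_mx W)
  (hfac : M = A *m W) (hstab : stable M A W)
  (hs : \rank A = s)
  (f : 'I_s -> 'I_m) (hf : strictly_increasing f) (hU : row_free (rowsub f A)) :
  forall g : 'I_s -> 'I_r, strictly_increasing g -> \rank (colsub g A) = s ->
  forall i : 'I_n,
    A *m ensemble_mx A f g *m rowsub f (col i M) = col i M.
Proof.
move=> g hg hC i.
rewrite ens_mul; last exact: sinc_inj.
set C := colsub g A; set P := rowsub f C.
have CA : (C^T <= A^T)%MS.
  have -> : C = A *m colsub g 1%:M by rewrite mulmx_colsub mulmx1.
  by rewrite trmx_mul submxMl.
have AC : (A^T <= C^T)%MS.
  by rewrite -(mxrank_leqif_sup CA) !mxrank_tr hC hs.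
have : ((col i M)^T <= C^T)%MS.
  apply: submx_trans AC.
  by rewrite hfac colE -mulmxA -colE trmx_mul submxMl.
case/submxP => D hD.
have -> : col i M = C *m D^T by rewrite -[col i M]trmxK hD trmx_mul trmxK.
have AfA : (A <= rowsub f A)%MS.
  rewrite -(mxrank_leqif_sup (rowsub_sub f A)).
  by move: hU; rewrite /row_free => /eqP ->; rewrite hs.
case/submxP: AfA => Y hY.
have PC : C = Y *m P.
  have -> : P = colsub g (rowsub f A) by apply/matrixP => a b; rewrite !mxE.
  by rewrite mulmx_colsub -hY.
have Pu : P \in unitmx.
  rewrite -row_free_unit /row_free eqn_leq rank_leq_row /=.
  by have := mxrankM_maxr Y P; rewrite -PC /C hC.
by rewrite -mul_rowsub_mx -/P mulmxA -(mulmxA C) mulVmx // mulmx1.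
Qed.
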